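(* Let $T\in B(H)$ satisfy $(T-t_N)^{k_N}(T-t_{N-1})^{k_{N-1}}\cdots(T-t_1)^{k_1}=0$, where $t_1,\ldots,t_N\in\mathbb C$ are pairwise distinct and $k_1,\ldots,k_N$ are positive integers. For $0\le m\le N$ let $R_m=\ker\big((T-t_m)^{k_m}\cdots(T-t_1)^{k_1}\big)$ (with $R_0=\{0\}$, so $R_N=H$), and for $1\le m\le N$ let $L_m=R_m\ominus R_{m-1}$. Then for every $m$, the orthogonal projection onto $L_m$ belongs to $C^*(T,1)$, the unital $C^*$-algebra generated by $T$. *)

(* Defs.v *)
From Stdlib Require Import Reals.
Open Scope R_scope.

Record Cx := mkC { Re : R; Im : R }.
Definition C0 : Cx := mkC 0 0.
Definition C1 : Cx := mkC 1 0.
Definition Cadd (a b : Cx) : Cx := mkC (Re a + Re b) (Im a + Im b).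
Definition Copp (a : Cx) : Cx := mkC (- Re a) (- Im a).
Definition Cmul (a b : Cx) : Cx :=
  mkC (Re a * Re b - Im a * Im b) (Re a * Im b + Im a * Re b).
Definition Cconj (a : Cx) : Cx := mkC (Re a) (- Im a).

Record HilbertSpace := {
  V :> Type;
  vzero : V;
  vadd : V -> V -> V;
  vopp : V -> V;
  vscal : Cx -> V -> V;
  inner : V -> V -> Cx;   (* linear in the first argument *)
  vadd_assoc : forall x y z, vadd x (vadd y z) = vadd (vadd x y) z;
  vadd_comm : forall x y, vadd x y = vadd y x;
  vadd_0 : forall x, vadd x vzero = x;
  vadd_opp : forall x, vadd x (vopp x) = vzero;
  vscal_1 : forall x, vscal C1 x = x;
  vscal_mul : forall a b x, vscal a (vscal b x) = vscal (Cmul a b) x;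
  vscal_addv : forall a x y, vscal a (vadd x y) = vadd (vscal a x) (vscal a y);
  vscal_addC : forall a b x, vscal (Cadd a b) x = vadd (vscal a x) (vscal b x);
  inner_add_l : forall x y z, inner (vadd x y) z = Cadd (inner x z) (inner y z);
  inner_scal_l : forall a x y, inner (vscal a x) y = Cmul a (inner x y);
  inner_conj : forall x y, inner y x = Cconj (inner x y);
  inner_pos : forall x, 0 <= Re (inner x x);
  inner_def : forall x, Re (inner x x) = 0 -> x = vzero;
  complete : forall u : nat -> V,
    (forall eps, eps > 0 -> exists N, forall p q, (N <= p)%nat -> (N <= q)%nat ->
        sqrt (Re (inner (vadd (u p) (vopp (u q))) (vadd (u p) (vopp (u q))))) < eps) ->
    exists l, forall eps, eps > 0 -> exists N, forall p, (N <= p)%nat ->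
        sqrt (Re (inner (vadd (u p) (vopp l)) (vadd (u p) (vopp l)))) < eps
}.

Arguments vzero {h}.
Arguments vadd {h}.
Arguments vopp {h}.
Arguments vscal {h}.
Arguments inner {h}.

Section Ops.
Variable H : HilbertSpace.

Definition vsub (x y : H) : H := vadd x (vopp y).
Definition vnorm (x : H) : R := sqrt (Re (inner x x)).

Definition op := H -> H.
Definition op_id : op := fun x => x.
Definition op_comp (A B : op) : op := fun x => A (B x).
Definition op_add (A B : op) : op := fun x => vadd (A x) (B x).
Definition op_scal (c : Cx) (A : op) : op := fun x => vscal c (A x).
Definition op_sub (A B : op) : op := fun x => vsub (A x) (B x).

Definition is_linear (A : op) : Prop :=
  (forall x y, A (vadd x y) = vadd (A x) (A y)) /\
  (forall c x, A (vscal c x) = vscal c (A x)).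

Definition bounded_op (A : op) : Prop :=
  is_linear A /\ exists M, forall x, vnorm (A x) <= M * vnorm x.

Definition is_adjoint (A Astar : op) : Prop :=
  forall x y, inner (A x) y = inner x (Astar y).

Definition op_norm_le (A : op) (eps : R) : Prop :=
  forall x, vnorm (A x) <= eps * vnorm x.

(* C*(T,1): the smallest norm-closed subalgebra of B(H) containing 1, T, T*;
   it is automatically closed under the adjoint. *)
Inductive in_Cstar (T Tstar : op) : op -> Prop :=
  | cs_id : in_Cstar T Tstar op_id
  | cs_T : in_Cstar T Tstar T
  | cs_Tstar : in_Cstar T Tstar Tstar
  | cs_add : forall A B, in_Cstar T Tstar A -> in_Cstar T Tstar B ->
      in_Cstar T Tstar (op_add A B)
  | cs_scal : forall c A, in_Cstar T Tstar A -> in_Cstar T Tstar (op_scal c A)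
  | cs_comp : forall A B, in_Cstar T Tstar A -> in_Cstar T Tstar B ->
      in_Cstar T Tstar (op_comp A B)
  | cs_lim : forall A, (forall eps, eps > 0 ->
        exists B, in_Cstar T Tstar B /\ op_norm_le (op_sub A B) eps) ->
      in_Cstar T Tstar A.

Definition is_orth_proj (M : H -> Prop) (P : op) : Prop :=
  forall x, M (P x) /\ forall y, M y -> inner (vsub x (P x)) y = C0.

Definition shift_pow (T : op) (t : Cx) (k : nat) : op :=
  Nat.iter k (op_comp (fun x => vsub (T x) (vscal t x))) op_id.

Fixpoint Qprod (T : op) (t : nat -> Cx) (k : nat -> nat) (m : nat) : op :=
  match m with
  | O => op_id
  | S m' => op_comp (shift_pow T (t m) (k m)) (Qprod T t k m')
  end.

Definition Rsp (T : op) (t : nat -> Cx) (k : nat -> nat) (m : nat) (x : H) : Prop :=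
  Qprod T t k m x = vzero.

Definition Lsp (T : op) (t : nat -> Cx) (k : nat -> nat) (m : nat) (x : H) : Prop :=
  Rsp T t k m x /\ forall y, Rsp T t k (m - 1) y -> inner x y = C0.

End Ops.

(* Main.v *)
From Stdlib Require Import Reals Lra Lia Psatz FunctionalExtensionality IndefiniteDescription.
Require Import Defs.
Open Scope R_scope.

Lemma Cx_eq a b : Re a = Re b -> Im a = Im b -> a = b.
Proof. destruct a, b; simpl; intros; subst; auto. Qed.

Definition Csub a b := Cadd a (Copp b).
Lemma Cring : ring_theory C0 C1 Cadd Cmul Csub Copp (@eq Cx).
Proof. constructor; intros; apply Cx_eq; unfold Csub; simpl; ring. Qed.
Add Ring Cring : Cring.

Lemma Cconj_add a b : Cconj (Cadd a b) = Cadd (Cconj a) (Cconj b).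
Proof. apply Cx_eq; simpl; ring. Qed.
Lemma Cconj_mul a b : Cconj (Cmul a b) = Cmul (Cconj a) (Cconj b).
Proof. apply Cx_eq; simpl; ring. Qed.
Lemma Cconj_invol a : Cconj (Cconj a) = a.
Proof. apply Cx_eq; simpl; ring. Qed.
Lemma Cconj_C0 : Cconj C0 = C0.
Proof. apply Cx_eq; simpl; ring. Qed.

Definition Cinv (a : Cx) : Cx :=
  mkC (Re a / (Re a * Re a + Im a * Im a)) (- Im a / (Re a * Re a + Im a * Im a)).
Lemma Cinv_l a : a <> C0 -> Cmul (Cinv a) a = C1.
Proof.
  intro Ha. assert (Hn : Re a * Re a + Im a * Im a <> 0).
  { intro E. apply Ha. apply Cx_eq; simpl; nra. }
  apply Cx_eq; unfold Cinv, Cmul; simpl; field; auto.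
Qed.

Lemma Cx_cancel a b : Cadd a (Cmul (Copp C1) b) = C0 -> b = a.
Proof.
  intro E. assert (E1 := f_equal Re E). assert (E2 := f_equal Im E).
  simpl in *. apply Cx_eq; lra.
Qed.


Section HS.
Variable H : HilbertSpace.

Definition mone : Cx := Copp C1.
Definition rc (r : R) : Cx := mkC r 0.

Lemma vadd_0_l (x : H) : vadd vzero x = x.
Proof. rewrite vadd_comm; apply vadd_0. Qed.
Lemma vadd_opp_l (x : H) : vadd (vopp x) x = vzero.
Proof. rewrite vadd_comm; apply vadd_opp. Qed.
Lemma vadd_cancel_l (a x y : H) : vadd a x = vadd a y -> x = y.
Proof.
  intro E. assert (E' : vadd (vopp a) (vadd a x) = vadd (vopp a) (vadd a y)) by (rewrite E; auto).
  rewrite !vadd_assoc, vadd_opp_l, !vadd_0_l in E'. exact E'.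
Qed.
Lemma vadd_self_0 (a x : H) : vadd a x = a -> x = vzero.
Proof. intro E. apply (vadd_cancel_l a). rewrite vadd_0. exact E. Qed.

Lemma vscal_0 (x : H) : vscal C0 x = vzero.
Proof.
  apply (vadd_self_0 (vscal C0 x)). rewrite <- vscal_addC.
  f_equal. ring.
Qed.
Lemma vscal_v0 (c : Cx) : vscal c (@vzero H) = vzero.
Proof.
  apply (vadd_self_0 (vscal c vzero)). rewrite <- vscal_addv, vadd_0. auto.
Qed.
Lemma vopp_scal (x : H) : vopp x = vscal mone x.
Proof.
  apply (vadd_cancel_l x). rewrite vadd_opp.
  rewrite <- (vscal_1 H x) at 1. rewrite <- vscal_addC.
  unfold mone. replace (Cadd C1 (Copp C1)) with C0 by ring. now rewrite vscal_0.
Qed.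
Lemma vsub_scal (x y : H) : vsub H x y = vadd x (vscal mone y).
Proof. unfold vsub. now rewrite vopp_scal. Qed.

Lemma vadd_swap4 (a b c d : H) : vadd (vadd a b) (vadd c d) = vadd (vadd a c) (vadd b d).
Proof.
  rewrite <- !vadd_assoc. f_equal. rewrite !vadd_assoc. f_equal. apply vadd_comm.
Qed.

Lemma vsub_self (x : H) : vsub H x x = vzero.
Proof. apply vadd_opp. Qed.

Lemma vsub_0 (x : H) : vsub H x vzero = x.
Proof. rewrite vsub_scal, vscal_v0. apply vadd_0. Qed.

Lemma vsub_eq0 (x y : H) : vsub H x y = vzero -> x = y.
Proof.
  intro E. apply (vadd_cancel_l (vopp y)). rewrite vadd_opp_l. rewrite vadd_comm. exact E.
Qed.

Lemma inner_0_l (y : H) : inner vzero y = C0.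
Proof. rewrite <- (vscal_0 vzero), inner_scal_l. ring. Qed.
Lemma inner_add_r (x y z : H) : inner x (vadd y z) = Cadd (inner x y) (inner x z).
Proof.
  rewrite inner_conj, inner_add_l, Cconj_add, <- !inner_conj. auto.
Qed.
Lemma inner_scal_r (c : Cx) (x y : H) : inner x (vscal c y) = Cmul (Cconj c) (inner x y).
Proof.
  rewrite inner_conj, inner_scal_l, Cconj_mul, <- inner_conj. auto.
Qed.
Lemma inner_0_r (y : H) : inner y vzero = C0.
Proof. rewrite inner_conj, inner_0_l. apply Cconj_C0. Qed.
Lemma inner_sub_l (x y z : H) : inner (vsub H x y) z = Cadd (inner x z) (Copp (inner y z)).
Proof. rewrite vsub_scal, inner_add_l, inner_scal_l. unfold mone. ring. Qed.
Lemma inner_sub_r (x y z : H) : inner z (vsub H x y) = Cadd (inner z x) (Copp (inner z y)).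
Proof.
  rewrite vsub_scal, inner_add_r, inner_scal_r. unfold mone.
  replace (Cconj (Copp C1)) with (Copp C1) by (apply Cx_eq; simpl; ring). ring.
Qed.
Lemma Im_inner_self (x : H) : Im (inner x x) = 0.
Proof. assert (E := f_equal Im (inner_conj H x x)). simpl in E. lra. Qed.
Lemma Re_inner_sym (x y : H) : Re (inner x y) = Re (inner y x).
Proof. rewrite (inner_conj H x y). simpl. auto. Qed.

Lemma inner_ext (u v : H) : (forall z, inner z u = inner z v) -> u = v.
Proof.
  intro E. apply vsub_eq0. apply inner_def.
  rewrite inner_sub_r, E. replace (Cadd (inner (vsub H u v) v) (Copp (inner (vsub H u v) v))) with C0 by ring.
  auto.
Qed.

Lemma nrm_ge0 (x : H) : 0 <= vnorm H x.
Proof. apply sqrt_pos. Qed.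
Lemma nrm_sq (x : H) : vnorm H x * vnorm H x = Re (inner x x).
Proof. apply sqrt_sqrt, inner_pos. Qed.
Lemma nrm_eq0 (x : H) : vnorm H x = 0 -> x = vzero.
Proof. intro E. apply inner_def. rewrite <- nrm_sq, E. ring. Qed.
Lemma nrm_small0 (x : H) : (forall eps, eps > 0 -> vnorm H x <= eps) -> x = vzero.
Proof.
  intro E. apply nrm_eq0. destruct (Req_dec (vnorm H x) 0) as [?|Hn]; auto.
  pose proof (nrm_ge0 x). specialize (E (vnorm H x / 2)). lra.
Qed.
Lemma nrm_le_of_sq (x : H) (c : R) : 0 <= c -> Re (inner x x) <= c * c -> vnorm H x <= c.
Proof. intros Hc E. rewrite <- nrm_sq in E. pose proof (nrm_ge0 x). nra. Qed.

Lemma Re_inner_add (x y : H) :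
  Re (inner (vadd x y) (vadd x y)) = Re (inner x x) + 2 * Re (inner x y) + Re (inner y y).
Proof.
  rewrite !inner_add_l, !inner_add_r. simpl. rewrite (Re_inner_sym y x). ring.
Qed.
Lemma Re_inner_scal (c : Cx) (x : H) :
  Re (inner (vscal c x) (vscal c x)) = (Re c * Re c + Im c * Im c) * Re (inner x x).
Proof.
  rewrite inner_scal_l, inner_scal_r. simpl. rewrite Im_inner_self. ring.
Qed.
Lemma Re_inner_scal_r (r : R) (x y : H) : Re (inner x (vscal (rc r) y)) = r * Re (inner x y).
Proof. rewrite inner_scal_r. simpl. ring. Qed.

Lemma CS (x y : H) : Rabs (Re (inner x y)) <= vnorm H x * vnorm H y.
Proof.
  set (a := Re (inner x x)). set (b := Re (inner y y)). set (r := Re (inner x y)).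
  assert (Q : forall l, 0 <= a - 2 * l * r + l * l * b).
  { intro l. pose proof (inner_pos H (vadd x (vscal (rc (-l)) y))) as P.
    rewrite Re_inner_add, Re_inner_scal_r, Re_inner_scal in P. simpl in P. unfold a, b, r. nra. }
  assert (r * r <= a * b).
  { destruct (Req_dec b 0) as [Hb|Hb].
    - assert (y = vzero) by (apply inner_def; auto). subst y.
      unfold r. rewrite inner_0_r. simpl. pose proof (inner_pos H x). unfold a. nra.
    - pose proof (inner_pos H y). assert (b > 0) by (unfold b in *; lra).
      specialize (Q (r / b)).
      assert (a - r * r / b >= 0).
      { replace (a - r * r / b) with (a - 2 * (r / b) * r + r / b * (r / b) * b) by (field; lra). lra. }
      assert (a * b - r * r >= 0).
      { replace (a * b - r * r) with ((a - r * r / b) * b) by (field; lra). nra. }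
      lra. }
  pose proof (nrm_sq x). pose proof (nrm_sq y). pose proof (nrm_ge0 x). pose proof (nrm_ge0 y).
  fold a in H1. fold b in H2.
  assert (Rabs r * Rabs r <= (vnorm H x * vnorm H y) * (vnorm H x * vnorm H y)).
  { rewrite <- Rabs_mult. rewrite Rabs_pos_eq by nra. nra. }
  pose proof (Rabs_pos r).
  assert (0 <= vnorm H x * vnorm H y) by (apply Rmult_le_pos; auto).
  set (P := vnorm H x * vnorm H y) in *. set (R0 := Rabs r) in *. clearbody P R0.
  destruct (Rle_dec R0 P); auto. exfalso. assert (P < R0) by lra.
  assert (P * P < R0 * R0). { apply Rle_lt_trans with (P * R0). apply Rmult_le_compat_l; lra. apply Rmult_lt_compat_r; lra. }
  lra.
Qed.
Lemma CS' (x y : H) : Re (inner x y) <= vnorm H x * vnorm H y.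
Proof. pose proof (CS x y). pose proof (Rle_abs (Re (inner x y))). lra. Qed.

Lemma nrm_tri (x y : H) : vnorm H (vadd x y) <= vnorm H x + vnorm H y.
Proof.
  apply nrm_le_of_sq. pose proof (nrm_ge0 x); pose proof (nrm_ge0 y); lra.
  rewrite Re_inner_add. pose proof (CS' x y). rewrite <- !nrm_sq. nra.
Qed.
Definition Cabs (c : Cx) : R := sqrt (Re c * Re c + Im c * Im c).
Lemma Cabs_ge0 c : 0 <= Cabs c.
Proof. apply sqrt_pos. Qed.
Lemma nrm_scal (c : Cx) (x : H) : vnorm H (vscal c x) = Cabs c * vnorm H x.
Proof.
  unfold vnorm, Cabs. rewrite Re_inner_scal. apply sqrt_mult_alt. nra.
Qed.
Lemma Cabs_mone : Cabs mone = 1.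
Proof. assert (E: Re mone * Re mone + Im mone * Im mone = 1) by (simpl; ring). unfold Cabs; rewrite E; apply sqrt_1. Qed.
Lemma Cabs_rc r : 0 <= r -> Cabs (rc r) = r.
Proof. intro. unfold Cabs, rc; simpl. replace (r * r + 0 * 0) with (r * r) by ring. apply sqrt_square; auto. Qed.
Lemma nrm_sub (x y : H) : vnorm H (vsub H x y) <= vnorm H x + vnorm H y.
Proof. rewrite vsub_scal. eapply Rle_trans. apply nrm_tri. rewrite nrm_scal, Cabs_mone. lra. Qed.
Lemma nrm_sub_sym (x y : H) : vnorm H (vsub H x y) = vnorm H (vsub H y x).
Proof.
  assert (vsub H x y = vscal mone (vsub H y x)).
  { rewrite !vsub_scal, vscal_addv, vscal_mul. unfold mone.
    replace (Cmul (Copp C1) (Copp C1)) with C1 by ring. rewrite vscal_1. apply vadd_comm. }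
  rewrite H0, nrm_scal, Cabs_mone. ring.
Qed.
Lemma nrm_sub_tri (x y z : H) : vnorm H (vsub H x z) <= vnorm H (vsub H x y) + vnorm H (vsub H y z).
Proof.
  replace (vsub H x z) with (vadd (vsub H x y) (vsub H y z)). apply nrm_tri.
  unfold vsub. rewrite <- vadd_assoc. f_equal. rewrite vadd_assoc, vadd_opp_l, vadd_0_l. auto.
Qed.

Lemma lin_0 (A : op H) : is_linear H A -> A vzero = vzero.
Proof. intros [Ha Hs]. rewrite <- (vscal_0 vzero), Hs, !vscal_0. auto. Qed.
Lemma lin_sub (A : op H) x y : is_linear H A -> A (vsub H x y) = vsub H (A x) (A y).
Proof. intros [Ha Hs]. rewrite !vsub_scal, Ha, Hs. auto. Qed.

End HS.


Section Ops3.
Variable H : HilbertSpace.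
Variables T Tstar : op H.
Hypothesis hT : bounded_op H T.
Hypothesis hadj : is_adjoint H T Tstar.

Inductive Pr : op H -> op H -> Prop :=
| pr_id : Pr (op_id H) (op_id H)
| pr_T : Pr T Tstar
| pr_Ts : Pr Tstar T
| pr_add A A' B B' : Pr A A' -> Pr B B' -> Pr (op_add H A B) (op_add H A' B')
| pr_scal c A A' : Pr A A' -> Pr (op_scal H c A) (op_scal H (Cconj c) A')
| pr_comp A A' B B' : Pr A A' -> Pr B B' -> Pr (op_comp H A B) (op_comp H B' A').

Inductive Pol : op H -> Prop :=
| pol_id : Pol (op_id H)
| pol_T : Pol T
| pol_add A B : Pol A -> Pol B -> Pol (op_add H A B)
| pol_scal c A : Pol A -> Pol (op_scal H c A)
| pol_comp A B : Pol A -> Pol B -> Pol (op_comp H A B).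

Lemma Pr_sym A A' : Pr A A' -> Pr A' A.
Proof.
  induction 1.
  - apply pr_id.
  - apply pr_Ts.
  - apply pr_T.
  - apply pr_add; auto.
  - pose proof (pr_scal (Cconj c) A' A IHPr) as P. rewrite Cconj_invol in P. exact P.
  - apply pr_comp; auto.
Qed.

Definition bnd (A : op H) (c : R) := 0 <= c /\ forall x, vnorm H (A x) <= c * vnorm H x.

Lemma T_lin : is_linear H T.
Proof. apply hT. Qed.
Lemma T_bnd : exists c, bnd T c.
Proof.
  destruct hT as [_ [M HM]]. exists (Rabs M). split. apply Rabs_pos.
  intro x. eapply Rle_trans. apply HM. apply Rmult_le_compat_r. apply nrm_ge0. apply Rle_abs.
Qed.
Lemma Ts_lin : is_linear H Tstar.
Proof.
  split.
  - intros x y. apply inner_ext. intro z. rewrite <- hadj, !inner_add_r, <- !hadj. auto.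
  - intros c x. apply inner_ext. intro z. rewrite <- hadj, !inner_scal_r, <- !hadj. auto.
Qed.
Lemma Ts_adj : is_adjoint H Tstar T.
Proof. intros x y. rewrite inner_conj, <- hadj, <- inner_conj. auto. Qed.
Lemma Ts_bnd : exists c, bnd Tstar c.
Proof.
  destruct T_bnd as [M [HM0 HM]]. exists M. split; auto. intro y.
  pose proof (CS' H (T (Tstar y)) y) as C.
  rewrite hadj in C. rewrite <- nrm_sq in C.
  pose proof (HM (Tstar y)). pose proof (nrm_ge0 H (Tstar y)). pose proof (nrm_ge0 H y).
  set (a := vnorm H (Tstar y)) in *. set (b := vnorm H y) in *. set (c := vnorm H (T (Tstar y))) in *.
  assert (a * a <= M * a * b) by nra.
  destruct (Req_dec a 0). nra.
  assert (a <= M * b). { apply Rmult_le_reg_l with a. lra. nra. } lra.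
Qed.

Lemma Pr_lin A A' : Pr A A' -> is_linear H A /\ is_linear H A'.
Proof.
  pose proof T_lin as [Ta Ts]. pose proof Ts_lin as [Sa Ss].
  induction 1.
  - split; split; intros; unfold op_id; auto.
  - split; split; auto.
  - split; split; auto.
  - destruct IHPr1 as [[a1 s1] [a1' s1']]. destruct IHPr2 as [[a2 s2] [a2' s2']].
    split; split; unfold op_add; intros.
    + rewrite a1, a2. apply vadd_swap4.
    + rewrite s1, s2, vscal_addv. auto.
    + rewrite a1', a2'. apply vadd_swap4.
    + rewrite s1', s2', vscal_addv. auto.
  - destruct IHPr as [[a1 s1] [a1' s1']].
    split; split; unfold op_scal; intros.
    + rewrite a1, vscal_addv. auto.
    + rewrite s1, !vscal_mul. f_equal. ring.
    + rewrite a1', vscal_addv. auto.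
    + rewrite s1', !vscal_mul. f_equal. ring.
  - destruct IHPr1 as [[a1 s1] [a1' s1']]. destruct IHPr2 as [[a2 s2] [a2' s2']].
    split; split; unfold op_comp; intros.
    + rewrite a2, a1. auto.
    + rewrite s2, s1. auto.
    + rewrite a1', a2'. auto.
    + rewrite s1', s2'. auto.
Qed.

Lemma Pr_adj A A' : Pr A A' -> is_adjoint H A A'.
Proof.
  induction 1; intros x y.
  - auto.
  - apply hadj.
  - apply Ts_adj.
  - unfold op_add. rewrite inner_add_l, inner_add_r, IHPr1, IHPr2. auto.
  - unfold op_scal. rewrite inner_scal_l, inner_scal_r, Cconj_invol, IHPr. auto.
  - unfold op_comp. rewrite IHPr1, IHPr2. auto.
Qed.

Lemma Pr_cs A A' : Pr A A' -> in_Cstar H T Tstar A /\ in_Cstar H T Tstar A'.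
Proof.
  induction 1; intuition (try constructor; auto).
Qed.

Lemma Pr_bnd A A' : Pr A A' -> exists c, bnd A c.
Proof.
  intro P. induction P.
  - exists 1. split. lra. intro; unfold op_id; lra.
  - apply T_bnd.
  - apply Ts_bnd.
  - destruct IHP1 as [a [a0 ha]]. destruct IHP2 as [b [b0 hb]]. exists (a + b). split. lra.
    intro x. unfold op_add. eapply Rle_trans. apply nrm_tri. specialize (ha x); specialize (hb x). lra.
  - destruct IHP as [a [a0 ha]]. exists (Cabs c * a). split. apply Rmult_le_pos; auto. apply Cabs_ge0.
    intro x. unfold op_scal. rewrite nrm_scal. rewrite Rmult_assoc. apply Rmult_le_compat_l. apply Cabs_ge0. auto.
  - destruct IHP1 as [a [a0 ha]]. destruct IHP2 as [b [b0 hb]]. exists (a * b). split. apply Rmult_le_pos; auto.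
    intro x. unfold op_comp. eapply Rle_trans. apply ha. rewrite Rmult_assoc. apply Rmult_le_compat_l; auto.
Qed.

Lemma Pol_Pr A : Pol A -> exists A', Pr A A'.
Proof.
  induction 1.
  - eexists; constructor.
  - eexists; constructor.
  - destruct IHPol1, IHPol2. eexists; constructor; eauto.
  - destruct IHPol. eexists; constructor; eauto.
  - destruct IHPol1, IHPol2. eexists; constructor; eauto.
Qed.
Lemma Pol_lin A : Pol A -> is_linear H A.
Proof. intro P. destruct (Pol_Pr A P) as [A' HA]. apply (Pr_lin _ _ HA). Qed.

Lemma Pol_comm_T A : Pol A -> forall x, A (T x) = T (A x).
Proof.
  pose proof T_lin as [Ta Ts].
  induction 1; intro x; unfold op_id, op_add, op_scal, op_comp.
  - auto.
  - auto.
  - rewrite IHPol1, IHPol2, Ta. auto.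
  - rewrite IHPol, Ts. auto.
  - rewrite IHPol2, IHPol1. auto.
Qed.
Lemma Pol_comm A B : Pol A -> Pol B -> forall x, A (B x) = B (A x).
Proof.
  intros PA PB. destruct (Pol_lin B PB) as [Ba Bs].
  induction PA; intro x; unfold op_id, op_add, op_scal, op_comp.
  - auto.
  - symmetry. apply Pol_comm_T. auto.
  - rewrite IHPA1, IHPA2, Ba. auto.
  - rewrite IHPA, Bs. auto.
  - rewrite IHPA2, IHPA1. auto.
Qed.

End Ops3.


Section Cop.
Variable H : HilbertSpace.
Variables T Tstar : op H.
Hypothesis hT : bounded_op H T.
Hypothesis hadj : is_adjoint H T Tstar.

Local Notation Pol := (Pol H T).

Definition cop (X Y : op H) := exists U W, Pol U /\ Pol W /\ forall x, vadd (U (X x)) (W (Y x)) = x.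

Lemma cop_sym X Y : cop X Y -> cop Y X.
Proof. intros [U [W [PU [PW E]]]]. exists W, U. repeat split; auto. intro x. rewrite vadd_comm. auto. Qed.

Lemma cop_id_l Y : cop (op_id H) Y.
Proof.
  exists (op_id H), (op_scal H C0 (op_id H)). split. apply pol_id. split. apply pol_scal, pol_id.
  intro x. unfold op_id, op_scal. rewrite vscal_0. apply vadd_0.
Qed.
Lemma cop_id_r Y : cop Y (op_id H).
Proof. apply cop_sym, cop_id_l. Qed.

Lemma cop_mul_r X Y Z : Pol X -> Pol Y -> Pol Z -> cop X Y -> cop X Z -> cop X (op_comp H Y Z).
Proof.
  intros PX PY PZ [U [W [PU [PW E]]]] [U' [W' [PU' [PW' E']]]].
  exists (op_add H U (op_comp H W (op_comp H Y U'))), (op_comp H W W').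
  split. apply pol_add; auto. apply pol_comp; auto. apply pol_comp; auto. split. apply pol_comp; auto.
  intro x. unfold op_add, op_comp.
  rewrite (Pol_comm H T Tstar hT hadj W' Y PW' PY).
  destruct (Pol_lin H T Tstar hT hadj W PW) as [Wa _].
  destruct (Pol_lin H T Tstar hT hadj Y PY) as [Ya _].
  rewrite <- vadd_assoc, <- Wa, <- Ya, E'. apply E.
Qed.
Lemma cop_mul_l X Y Z : Pol X -> Pol Y -> Pol Z -> cop Y X -> cop Z X -> cop (op_comp H Y Z) X.
Proof. intros. apply cop_sym, cop_mul_r; auto; apply cop_sym; auto. Qed.

Definition Lop (a : Cx) : op H := fun x => vsub H (T x) (vscal a x).
Lemma Lop_eq a : Lop a = op_add H T (op_scal H (Cmul mone a) (op_id H)).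
Proof.
  apply functional_extensionality. intro x. unfold Lop, op_add, op_scal, op_id.
  rewrite vsub_scal, vscal_mul. auto.
Qed.
Lemma Pol_Lop a : Pol (Lop a).
Proof. rewrite Lop_eq. apply pol_add. apply pol_T. apply pol_scal, pol_id. Qed.

Lemma vcomb (u x : H) (a b c d : Cx) :
  vadd (vadd (vscal a u) (vscal b x)) (vadd (vscal c u) (vscal d x)) = vadd (vscal (Cadd a c) u) (vscal (Cadd b d) x).
Proof. rewrite vadd_swap4, !vscal_addC. auto. Qed.

Lemma cop_Lop a b : a <> b -> cop (Lop a) (Lop b).
Proof.
  intro hab. set (c := Cinv (Cadd b (Copp a))).
  assert (hc : Cmul c (Cadd b (Copp a)) = C1).
  { apply Cinv_l. intro E. apply hab. apply Cx_cancel. rewrite <- E. ring. }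
  exists (op_scal H c (op_id H)), (op_scal H (Copp c) (op_id H)). split. apply pol_scal, pol_id. split. apply pol_scal, pol_id.
  intro x. rewrite !Lop_eq. unfold op_add, op_scal, op_id.
  rewrite !vscal_addv, !vscal_mul, vcomb.
  replace (Cadd c (Copp c)) with C0 by ring. rewrite vscal_0, vadd_0_l.
  replace (Cadd (Cmul c (Cmul mone a)) (Cmul (Copp c) (Cmul mone b))) with C1.
  apply vscal_1. rewrite <- hc. unfold mone. ring.
Qed.

Lemma Pol_shift a n : Pol (shift_pow H T a n).
Proof.
  induction n. apply pol_id. simpl. change (Pol (op_comp H (Lop a) (shift_pow H T a n))).
  apply pol_comp; auto. apply Pol_Lop.
Qed.

Lemma cop_shift a b n l : a <> b -> cop (shift_pow H T a n) (shift_pow H T b l).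
Proof.
  intro hab. induction n.
  - apply cop_id_l.
  - change (cop (op_comp H (Lop a) (shift_pow H T a n)) (shift_pow H T b l)).
    apply cop_mul_l; try apply Pol_shift; try apply Pol_Lop; auto.
    clear IHn. induction l.
    + apply cop_id_r.
    + change (cop (Lop a) (op_comp H (Lop b) (shift_pow H T b l))).
      apply cop_mul_r; try apply Pol_shift; try apply Pol_Lop; auto. apply cop_Lop; auto.
Qed.

Variable N : nat.
Variables (t : nat -> Cx) (k : nat -> nat).
Hypothesis hdist : forall i j, (1 <= i <= N)%nat -> (1 <= j <= N)%nat -> i <> j -> t i <> t j.

Lemma Pol_Qprod m : Pol (Qprod H T t k m).
Proof. induction m; simpl. apply pol_id. apply pol_comp; auto. apply Pol_shift. Qed.

Lemma cop_Qprod_j m j : (m < j <= N)%nat -> cop (Qprod H T t k m) (shift_pow H T (t j) (k j)).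
Proof.
  intro hj. induction m.
  - apply cop_id_l.
  - simpl. apply cop_mul_l; try apply Pol_shift; try apply Pol_Qprod.
    apply cop_shift. apply hdist; lia. apply IHm. lia.
Qed.

Fixpoint Qtop (m d : nat) : op H :=
  match d with
  | O => op_id H
  | S d' => op_comp H (shift_pow H T (t (S (m + d'))) (k (S (m + d')))) (Qtop m d')
  end.

Lemma Pol_Qtop m d : Pol (Qtop m d).
Proof. induction d; simpl. apply pol_id. apply pol_comp; auto. apply Pol_shift. Qed.

Lemma Qprod_split m d x : Qprod H T t k (m + d) x = Qtop m d (Qprod H T t k m x).
Proof.
  induction d.
  - rewrite Nat.add_0_r. auto.
  - rewrite Nat.add_succ_r. simpl. unfold op_comp. rewrite IHd. auto.
Qed.

Lemma cop_Qtop m d : (m + d <= N)%nat -> cop (Qprod H T t k m) (Qtop m d).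
Proof.
  induction d; intro hd.
  - apply cop_id_r.
  - simpl. apply cop_mul_r; try apply Pol_shift; try apply Pol_Qprod; try apply Pol_Qtop.
    apply cop_Qprod_j. lia. apply IHd. lia.
Qed.

End Cop.


Section Extra.
Variable H : HilbertSpace.
Lemma nrm_0 : vnorm H vzero = 0.
Proof. unfold vnorm. rewrite inner_0_l. simpl. apply sqrt_0. Qed.
Lemma vadd_vsub (x y : H) : vadd y (vsub H x y) = x.
Proof. unfold vsub. rewrite vadd_comm, <- vadd_assoc, vadd_opp_l, vadd_0. auto. Qed.
Lemma vsub_add_l (a b c : H) : vsub H (vadd a b) c = vadd (vsub H a c) b.
Proof. unfold vsub. rewrite <- !vadd_assoc. f_equal. apply vadd_comm. Qed.
Lemma vsub_add_r (u v b : H) : vsub H u (vadd v b) = vsub H (vsub H u v) b.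
Proof. rewrite !vsub_scal, vscal_addv, vadd_assoc. auto. Qed.
Lemma vscal_sub (c : Cx) (a b : H) : vscal c (vsub H a b) = vsub H (vscal c a) (vscal c b).
Proof. rewrite !vsub_scal, vscal_addv, !vscal_mul. f_equal. f_equal. ring. Qed.
Lemma le_eps (a b : R) : (forall eps, eps > 0 -> a <= b + eps) -> a <= b.
Proof. intro E. destruct (Rle_dec a b); auto. specialize (E ((a - b)/2)). lra. Qed.
Lemma pow_decr (r : R) n m : 0 <= r <= 1 -> (n <= m)%nat -> r ^ m <= r ^ n.
Proof.
  intros Hr Hnm. replace m with (n + (m - n))%nat by lia. rewrite pow_add.
  assert (r ^ (m - n) <= 1). { rewrite <- (pow1 (m - n)). apply pow_incr. lra. }
  assert (0 <= r ^ n) by (apply pow_le; lra). nra.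
Qed.
Lemma pow_small (r : R) (C eps : R) : 0 <= r < 1 -> 0 <= C -> eps > 0 -> exists n, forall m, (n <= m)%nat -> C * r ^ m < eps.
Proof.
  intros Hr HC He. destruct (pow_lt_1_zero r) with (y := eps / (C + 1)) as [n Hn].
  rewrite Rabs_pos_eq; lra. apply Rdiv_lt_0_compat; lra.
  exists n. intros m Hm. specialize (Hn m Hm). rewrite Rabs_pos_eq in Hn by (apply pow_le; lra).
  assert (0 <= r ^ m) by (apply pow_le; lra).
  assert (C * r ^ m <= (C + 1) * r ^ m) by nra.
  assert ((C + 1) * r ^ m < (C + 1) * (eps / (C + 1))) by (apply Rmult_lt_compat_l; lra).
  replace ((C + 1) * (eps / (C + 1))) with eps in * by (field; lra). lra.
Qed.
End Extra.

Fixpoint opow (H : HilbertSpace) (A : op H) (n : nat) : op H :=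
  match n with O => op_id H | S n => op_comp H A (opow H A n) end.
Fixpoint esum (H : HilbertSpace) (A : op H) (n : nat) : op H :=
  match n with O => op_scal H C0 (op_id H) | S n => op_add H (esum H A n) (opow H A n) end.

Section Proj.
Variable H : HilbertSpace.
Variables T Tstar : op H.
Hypothesis hT : bounded_op H T.
Hypothesis hadj : is_adjoint H T Tstar.
Local Notation Pol := (Pol H T).
Local Notation Pr := (Pr H T Tstar).

Lemma Pr_opow A A' n : Pr A A' -> exists B', Pr (opow H A n) B'.
Proof.
  intro P. induction n; simpl. eexists; apply pr_id. destruct IHn. eexists; apply pr_comp; eauto.
Qed.
Lemma Pr_esum A A' n : Pr A A' -> exists B', Pr (esum H A n) B'.
Proof.
  intro P. induction n; simpl. eexists; apply pr_scal, pr_id.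
  destruct IHn. destruct (Pr_opow A A' n P). eexists; apply pr_add; eauto.
Qed.

Variable F : op H.
Hypothesis PF : Pol F.
Hypothesis Fidem : forall x, F (F x) = F x.

Lemma proj_of_idem : exists P, in_Cstar H T Tstar P /\ forall x, (exists z, P x = F z) /\
   (forall y, F y = y -> inner (vsub H x (P x)) y = C0).
Proof.
  destruct (Pol_Pr H T Tstar F PF) as [F' PrF].
  pose proof (Pr_sym _ _ _ _ _ PrF) as PrF'.
  destruct (Pr_lin H T Tstar hT hadj _ _ PrF) as [[Fa Fs] [F'a F's]].
  pose proof (Pr_adj H T Tstar hadj _ _ PrF) as adjF.
  pose proof (Pr_adj H T Tstar hadj _ _ PrF') as adjF'.
  destruct (Pr_cs H T Tstar _ _ PrF) as [csF csF'].
  destruct (Pr_bnd H T Tstar hT hadj _ _ PrF) as [cF [cF0 bF]].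
  destruct (Pr_bnd H T Tstar hT hadj _ _ PrF') as [cF' [cF'0 bF']].
  assert (F'idem : forall x, F' (F' x) = F' x).
  { intro x. apply inner_ext. intro z. rewrite <- !adjF, Fidem. auto. }
  set (G := op_add H (op_id H) (op_scal H mone F)).
  set (G' := op_add H (op_id H) (op_scal H (Cconj mone) F')).
  assert (PrG : Pr G G') by (apply pr_add; [apply pr_id | apply pr_scal; auto]).
  pose proof (Pr_sym _ _ _ _ _ PrG) as PrG'.
  pose proof (Pr_adj H T Tstar hadj _ _ PrG') as adjG'.
  assert (Gx : forall x, G x = vsub H x (F x)).
  { intro x. unfold G, op_add, op_scal, op_id. rewrite vsub_scal. auto. }
  assert (Cm : Cconj mone = mone) by (apply Cx_eq; unfold mone; simpl; ring).
  assert (G'x : forall x, G' x = vsub H x (F' x)).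
  { intro x. unfold G', op_add, op_scal, op_id. rewrite vsub_scal, Cm. auto. }
  set (S := op_add H (op_comp H F F') (op_comp H G' G)).
  assert (PrS : Pr S S) by (apply pr_add; apply pr_comp; auto).
  destruct (Pr_lin H T Tstar hT hadj _ _ PrS) as [[Sa Ss] _].
  destruct (Pr_bnd H T Tstar hT hadj _ _ PrS) as [cS [cS0 bS]].
  set (c0 := cF + 1 + cF').
  set (K2 := 2 * c0 * c0 + 1).
  assert (K2pos : K2 >= 1) by (unfold K2; nra).
  set (kap := / K2).
  assert (kap0 : 0 < kap <= 1).
  { unfold kap. split. apply Rinv_0_lt_compat; lra. rewrite <- Rinv_1. apply Rinv_le_contravar; lra. }
  assert (kapK : kap * K2 = 1) by (unfold kap; field; lra).
  set (r := 1 - kap / 4).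
  assert (r0 : 0 <= r < 1) by (unfold r; lra).
  set (B := op_add H (op_id H) (op_scal H (rc (- kap)) S)).
  assert (PrB : exists B', Pr B B') by (eexists; apply pr_add; [apply pr_id | apply pr_scal; eauto]).
  destruct PrB as [B' PrB].
  assert (Bc : forall x, vnorm H (B x) <= r * vnorm H x).
  { intro x.
    set (a := vnorm H (F' x)). set (b := vnorm H (G x)).
    assert (a0 : 0 <= a) by apply nrm_ge0. assert (b0 : 0 <= b) by apply nrm_ge0.
    assert (E1 : Re (inner (S x) x) = a * a + b * b).
    { unfold S, op_add, op_comp. rewrite inner_add_l, adjF, adjG'. simpl.
      unfold a, b. rewrite !nrm_sq. auto. }
    assert (E2 : vnorm H x <= a + b).
    { pose proof (nrm_ge0 H x) as n0.
      assert (Q : Re (inner x x) <= vnorm H x * (a + b)).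
      { assert (x = vadd (F x) (G x)) as Ex by (rewrite Gx; symmetry; apply vadd_vsub).
        rewrite Ex at 1. rewrite inner_add_l. simpl. rewrite adjF.
        pose proof (CS' H x (F' x)). pose proof (CS' H (G x) x). fold a in H0. fold b in H1. nra. }
      rewrite <- nrm_sq in Q. destruct (Req_dec (vnorm H x) 0). lra.
      apply Rmult_le_reg_l with (vnorm H x). lra. nra. }
    assert (E3 : vnorm H (S x) <= c0 * (a + b)).
    { unfold S, op_add, op_comp. eapply Rle_trans. apply nrm_tri.
      rewrite G'x. pose proof (nrm_sub H (G x) (F' (G x))) as h1. pose proof (bF (F' x)) as h2. pose proof (bF' (G x)) as h3.
      fold a in h2. fold b in h1. fold b in h3. unfold c0. nra. }
    assert (E4 : Re (inner (B x) (B x)) = vnorm H x * vnorm H x - 2 * kap * (a * a + b * b)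
                    + kap * kap * (vnorm H (S x) * vnorm H (S x))).
    { unfold B, op_add, op_scal, op_id. rewrite Re_inner_add, Re_inner_scal_r, Re_inner_scal, (Re_inner_sym H x (S x)), E1.
      rewrite !nrm_sq. simpl. ring. }
    apply nrm_le_of_sq. apply Rmult_le_pos; [lra|apply nrm_ge0]. rewrite E4.
    pose proof (nrm_ge0 H (S x)). pose proof (nrm_ge0 H x).
    set (n := vnorm H x) in *. set (m := vnorm H (S x)) in *. clearbody a b n m.
    assert (m * m <= c0 * c0 * ((a + b) * (a + b))) by (assert (0 <= c0) by (unfold c0; lra); nra).
    assert ((a + b) * (a + b) <= 2 * (a * a + b * b)) by (pose proof (Rle_0_sqr (a - b)); unfold Rsqr in *; nra).
    assert (m * m <= K2 * (a * a + b * b)) by (unfold K2; nra).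
    assert (kap * kap * (m * m) <= kap * (a * a + b * b)).
    { replace (kap * (a * a + b * b)) with (kap * kap * (K2 * (a * a + b * b))) by (replace (kap * kap * (K2 * (a * a + b * b))) with (kap * (kap * K2) * (a * a + b * b)) by ring; rewrite kapK; ring).
      apply Rmult_le_compat_l; nra. }
    assert (n * n <= 2 * (a * a + b * b)) by nra.
    unfold r. nra. }
  assert (Bp : forall n x, vnorm H (opow H B n x) <= r ^ n * vnorm H x).
  { induction n; intro x; simpl. unfold op_id; lra. unfold op_comp.
    eapply Rle_trans. apply Bc. rewrite Rmult_assoc. apply Rmult_le_compat_l. lra. apply IHn. }
  assert (Eid : forall n x, vadd (vscal (rc kap) (S (esum H B n x))) (opow H B n x) = x).
  { induction n; intro x; simpl.
    - unfold op_scal, op_id. rewrite vscal_0, (lin_0 H S (conj Sa Ss)), vscal_v0. apply vadd_0_l.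
    - unfold op_add, op_comp. rewrite Sa, vscal_addv. set (y := opow H B n x).
      change (B y) with (vadd y (vscal (rc (- kap)) (S y))).
      rewrite vadd_swap4, <- vscal_addC.
      replace (Cadd (rc kap) (rc (- kap))) with C0 by (apply Cx_eq; unfold rc; simpl; ring).
      rewrite vscal_0, vadd_0. apply IHn. }
  assert (Cau : forall n d x, vnorm H (vsub H (esum H B (n + d) x) (esum H B n x)) <= (r ^ n - r ^ (n + d)) / (1 - r) * vnorm H x).
  { intros n d x. induction d.
    - rewrite Nat.add_0_r, vsub_self, nrm_0. replace (r ^ n - r ^ n) with 0 by ring.
      unfold Rdiv. rewrite Rmult_0_l, Rmult_0_l. lra.
    - rewrite Nat.add_succ_r. simpl. unfold op_add. rewrite vsub_add_l.
      eapply Rle_trans. apply nrm_tri. pose proof (Bp (n + d)%nat x).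
      replace ((r ^ n - r * r ^ (n + d)) / (1 - r) * vnorm H x) with
        ((r ^ n - r ^ (n + d)) / (1 - r) * vnorm H x + r ^ (n + d) * vnorm H x) by (field; lra).
      lra. }
  assert (Cau2 : forall n p x, (n <= p)%nat -> vnorm H (vsub H (esum H B p x) (esum H B n x)) <= r ^ n / (1 - r) * vnorm H x).
  { intros n p x Hnp. replace p with (n + (p - n))%nat by lia. eapply Rle_trans. apply Cau.
    apply Rmult_le_compat_r. apply nrm_ge0. apply Rmult_le_compat_r.
    left; apply Rinv_0_lt_compat; lra. assert (0 <= r ^ (n + (p - n))) by (apply pow_le; lra). lra. }
  assert (Lim : forall x, exists l, forall eps, eps > 0 -> exists N, forall p, (N <= p)%nat ->
              vnorm H (vsub H (esum H B p x) l) < eps).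
  { intro x. apply (complete H (fun p => esum H B p x)).
    intros eps He. destruct (pow_small r (vnorm H x / (1 - r)) eps) as [N HN]; auto.
    apply Rmult_le_pos. apply nrm_ge0. left; apply Rinv_0_lt_compat; lra.
    exists N. intros p q Hp Hq. change (vnorm H (vsub H (esum H B p x) (esum H B q x)) < eps).
    specialize (HN N (le_n N)).
    assert (Hb : forall p q, (N <= p)%nat -> (q <= p)%nat -> (N <= q)%nat ->
              vnorm H (vsub H (esum H B p x) (esum H B q x)) < eps).
    { intros p0 q0 H1 H2 H3. eapply Rle_lt_trans. apply Cau2; auto.
      eapply Rle_lt_trans; [|apply HN].
      replace (vnorm H x / (1 - r) * r ^ N) with (r ^ N / (1 - r) * vnorm H x) by (field; lra).
      apply Rmult_le_compat_r. apply nrm_ge0. apply Rmult_le_compat_r. left; apply Rinv_0_lt_compat; lra.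
      apply pow_decr; auto. lra. }
    destruct (Nat.le_ge_cases q p). apply Hb; auto. rewrite nrm_sub_sym. apply Hb; auto. }
  set (w := fun x => proj1_sig (constructive_indefinite_description _ (Lim x))).
  assert (Hw : forall x eps, eps > 0 -> exists N, forall p, (N <= p)%nat -> vnorm H (vsub H (esum H B p x) (w x)) < eps).
  { intro x. unfold w. destruct (constructive_indefinite_description _ (Lim x)). simpl. auto. }
  assert (Tail : forall n x, vnorm H (vsub H (w x) (esum H B n x)) <= r ^ n / (1 - r) * vnorm H x).
  { intros n x. apply le_eps. intros eps He. destruct (Hw x eps He) as [N HN].
    specialize (HN (max N n) (Nat.le_max_l _ _)).
    eapply Rle_trans. apply (nrm_sub_tri H _ (esum H B (max N n) x)).
    rewrite nrm_sub_sym in HN. pose proof (Cau2 n (max N n) x (Nat.le_max_r _ _)). lra. }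
  assert (Sw : forall x, vscal (rc kap) (S (w x)) = x).
  { intro x. apply vsub_eq0. apply nrm_small0. intros eps He.
    destruct (pow_small r ((kap * cS / (1 - r) + 1) * vnorm H x) eps) as [n Hn]; auto.
    apply Rmult_le_pos. assert (0 <= kap * cS / (1 - r)). { apply Rmult_le_pos. nra. left; apply Rinv_0_lt_compat; lra. } lra. apply nrm_ge0.
    specialize (Hn n (le_n n)).
    set (e := esum H B n x). set (b := opow H B n x).
    pose proof (Eid n x) as E. fold e b in E.
    assert (D : vsub H (vscal (rc kap) (S (w x))) x = vsub H (vscal (rc kap) (S (vsub H (w x) e))) b).
    { transitivity (vsub H (vscal (rc kap) (S (w x))) (vadd (vscal (rc kap) (S e)) b)). rewrite E; auto.
      rewrite vsub_add_r. f_equal. rewrite (lin_sub H S _ _ (conj Sa Ss)), vscal_sub. auto. }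
    rewrite D. eapply Rle_trans. apply nrm_sub. rewrite nrm_scal, Cabs_rc by lra.
    pose proof (bS (vsub H (w x) e)). pose proof (Tail n x). fold e in H1. pose proof (Bp n x). fold b in H2.
    assert (kap * vnorm H (S (vsub H (w x) e)) <= kap * cS * (r ^ n / (1 - r) * vnorm H x)).
    { rewrite Rmult_assoc. apply Rmult_le_compat_l. lra. eapply Rle_trans. apply H0. apply Rmult_le_compat_l; auto. }
    assert (kap * cS * (r ^ n / (1 - r) * vnorm H x) + r ^ n * vnorm H x = (kap * cS / (1 - r) + 1) * vnorm H x * r ^ n) by (field; lra).
    lra. }
  set (P := fun x => F (F' (vscal (rc kap) (w x)))).
  exists P. split.
  - apply cs_lim. intros eps He.
    destruct (pow_small r (cF * cF' * kap / (1 - r)) eps) as [n Hn]; auto.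
    repeat apply Rmult_le_pos; try lra. left; apply Rinv_0_lt_compat; lra.
    specialize (Hn n (le_n n)).
    exists (op_comp H F (op_comp H F' (op_scal H (rc kap) (esum H B n)))). split.
    + destruct (Pr_esum B B' n PrB) as [E' PrE]. destruct (Pr_cs H T Tstar _ _ PrE) as [csE _].
      apply cs_comp; auto. apply cs_comp; auto. apply cs_scal; auto.
    + intro x. unfold op_sub, op_comp, op_scal, P.
      rewrite <- (lin_sub H F _ _ (conj Fa Fs)), <- (lin_sub H F' _ _ (conj F'a F's)), <- vscal_sub.
      eapply Rle_trans. apply bF. eapply Rle_trans. apply Rmult_le_compat_l. auto. apply bF'.
      rewrite nrm_scal, Cabs_rc by lra. pose proof (Tail n x).
      assert (cF * (cF' * (kap * vnorm H (vsub H (w x) (esum H B n x)))) <= cF * cF' * kap * (r ^ n / (1 - r) * vnorm H x)).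
      { rewrite !Rmult_assoc. apply Rmult_le_compat_l; auto. apply Rmult_le_compat_l; auto. apply Rmult_le_compat_l; lra. }
      eapply Rle_trans. apply H1. replace (cF * cF' * kap * (r ^ n / (1 - r) * vnorm H x)) with (cF * cF' * kap / (1 - r) * r ^ n * vnorm H x) by (field; lra).
      apply Rmult_le_compat_r. apply nrm_ge0. lra.
  - intro x. split. exists (F' (vscal (rc kap) (w x))). auto.
    intros y Fy. rewrite <- Fy. rewrite <- adjF'.
    assert (Z : F' (vsub H x (P x)) = vzero).
    { assert (Key : forall u, F' (vscal (rc kap) (S u)) = F' (F (F' (vscal (rc kap) u)))).
      { intro u. rewrite !F's, !Fs, !F's. f_equal. unfold S, op_add, op_comp.
        rewrite F'a, G'x, (lin_sub H F' _ _ (conj F'a F's)), F'idem, vsub_self, vadd_0. auto. }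
      assert (FP : F' (P x) = F' x) by (unfold P; rewrite <- Key, Sw; auto).
      rewrite (lin_sub H F' _ _ (conj F'a F's)), FP. apply vsub_self. }
    rewrite Z. apply inner_0_l.
Qed.
End Proj.


Lemma projR (H : HilbertSpace) (T Tstar : op H)
  (N : nat) (t : nat -> Cx) (k : nat -> nat)
  (hT : bounded_op H T) (hadj : is_adjoint H T Tstar)
  (hdist : forall i j, (1 <= i <= N)%nat -> (1 <= j <= N)%nat -> i <> j -> t i <> t j)
  (hann : forall x, Qprod H T t k N x = vzero) :
  forall m, (m <= N)%nat -> exists P, in_Cstar H T Tstar P /\ forall x, Rsp H T t k m (P x) /\
     (forall y, Rsp H T t k m y -> inner (vsub H x (P x)) y = C0).
Proof.
  intros m hm.
  destruct (cop_Qtop H T Tstar hT hadj N t k hdist m (N - m) ltac:(lia)) as [U [W [PU [PW E]]]].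
  set (Q := Qtop H T t k m (N - m)).
  set (F := op_comp H W Q).
  assert (PF : Pol H T F) by (apply pol_comp; auto; apply Pol_Qtop).
  assert (FR : forall z, Qprod H T t k m (F z) = vzero).
  { intro z. unfold F, op_comp. rewrite (Pol_comm H T Tstar hT hadj _ W (Pol_Qprod H T t k m) PW).
    unfold Q. rewrite (Pol_comm H T Tstar hT hadj _ _ (Pol_Qprod H T t k m) (Pol_Qtop H T t k m (N - m))).
    rewrite <- Qprod_split. replace (m + (N - m))%nat with N by lia. rewrite hann.
    apply (lin_0 H W (Pol_lin H T Tstar hT hadj W PW)). }
  assert (Fid : forall y, Qprod H T t k m y = vzero -> F y = y).
  { intros y Hy. rewrite <- (E y) at 2. rewrite Hy, (lin_0 H U (Pol_lin H T Tstar hT hadj U PU)), vadd_0_l. auto. }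
  assert (Fidem : forall x, F (F x) = F x) by (intro x; apply Fid, FR).
  destruct (proj_of_idem H T Tstar hT hadj F PF Fidem) as [P [csP HP]].
  exists P. split; auto. intro x. destruct (HP x) as [[z Hz] Ho]. split.
  - unfold Rsp. rewrite Hz. apply FR.
  - intros y Hy. apply Ho. apply Fid. apply Hy.
Qed.

Theorem mainTheorem5 (H : HilbertSpace) (T Tstar : op H)
  (N : nat) (t : nat -> Cx) (k : nat -> nat)
  (hT : bounded_op H T) (hadj : is_adjoint H T Tstar)
  (hdist : forall i j, (1 <= i <= N)%nat -> (1 <= j <= N)%nat -> i <> j -> t i <> t j)
  (hk : forall i, (1 <= i <= N)%nat -> (1 <= k i)%nat)
  (hann : forall x, Qprod H T t k N x = vzero) :
  forall m, (1 <= m <= N)%nat ->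
    exists P, is_orth_proj H (Lsp H T t k m) P /\ in_Cstar H T Tstar P.
Proof.
  intros m hm.
  destruct (projR H T Tstar N t k hT hadj hdist hann m ltac:(lia)) as [P1 [cs1 H1]].
  destruct (projR H T Tstar N t k hT hadj hdist hann (m - 1) ltac:(lia)) as [P0 [cs0 H0]].
  assert (sub : forall z, Rsp H T t k (m - 1) z -> Rsp H T t k m z).
  { intros z Hz. unfold Rsp in *. replace m with (S (m - 1)) by lia. simpl. unfold op_comp. rewrite Hz.
    apply (lin_0 H _ (Pol_lin H T Tstar hT hadj _ (Pol_shift H T _ _))). }
  exists (op_add H P1 (op_scal H mone P0)). split.
  2: { apply cs_add; auto. apply cs_scal; auto. }
  intro x. destruct (H1 x) as [R1 O1]. destruct (H0 x) as [R0 O0].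
  split.
  - split.
    + unfold Rsp, op_add, op_scal. destruct (Pol_lin H T Tstar hT hadj _ (Pol_Qprod H T t k m)) as [Qa Qs].
      rewrite Qa, Qs, R1, (sub _ R0), vscal_v0. apply vadd_0.
    + intros y Hy. unfold op_add, op_scal. rewrite inner_add_l, inner_scal_l.
      pose proof (O1 y (sub _ Hy)) as e1. pose proof (O0 y Hy) as e0.
      rewrite inner_sub_l in e1, e0.
      pose proof (f_equal Re e1). pose proof (f_equal Im e1). pose proof (f_equal Re e0). pose proof (f_equal Im e0).
      simpl in *. apply Cx_eq; simpl; lra.
  - intros y [Ry Oy]. unfold op_add, op_scal. rewrite inner_sub_l, inner_add_l, inner_scal_l.
    pose proof (O1 y Ry) as e1. rewrite inner_sub_l in e1.
    rewrite (inner_conj H y (P0 x)), (Oy _ R0).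
    pose proof (f_equal Re e1). pose proof (f_equal Im e1).
    simpl in *. apply Cx_eq; simpl; lra.
Qed.
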